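(* Let $p(n,k)$ be the number of partitions of the integer $n$ into exactly $k$ positive parts and $q(n,k)$ the number of partitions of $n$ into exactly $k$ pairwise distinct positive parts. Let $(n_m,k_m)_{m\ge1}$ be a sequence of pairs of integers with $k_m\ge 2$ and $n_m\ge k_m$. If $n_m/k_m^3\to\infty$ then $q(n_m,k_m)/p(n_m,k_m)\to 1$; if $n_m/k_m^3\to 0$ then $q(n_m,k_m)/p(n_m,k_m)\to 0$. Equivalently, the probability that a uniformly random partition of $n_m$ into $k_m$ positive parts has two equal parts tends to $0$ in the first case and to $1$ in the second.
   Context: A partition of $n$ into $k$ positive parts is a multiset of $k$ positive integers with sum $n$ (equivalently a sequence $1\le x_1\le\dots\le x_k$ with $\sum x_i=n$). *)

(* Defs.v *)
From mathcomp Require Import all_boot.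
Set Implicit Arguments. Unset Strict Implicit. Unset Printing Implicit Defensive.

(* Every part is <= n,
   so such sequences are exactly the k-tuples over 'I_n.+1 satisfying
   the conditions below; this gives a finite type to count over. *)

Definition is_partition (n k : nat) (s : seq nat) : bool :=
  [&& size s == k, all (fun x => 0 < x) s, sorted leq s & sumn s == n].

Definition is_distinct_partition (n k : nat) (s : seq nat) : bool :=
  [&& size s == k, all (fun x => 0 < x) s, sorted ltn s & sumn s == n].

Definition p_part (n k : nat) : nat :=
  #|[set t : k.-tuple 'I_n.+1 | is_partition n k (map val t)]|.

Definition q_part (n k : nat) : nat :=
  #|[set t : k.-tuple 'I_n.+1 | is_distinct_partition n k (map val t)]|.

(* Main.v *)
Require Import Defs.
From Stdlib Require Import Reals Lra.
From mathcomp Require all_boot zify.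

Module NatPart.
From mathcomp Require Import all_boot zify.
Local Set Implicit Arguments. Local Unset Strict Implicit. Local Unset Printing Implicit Defensive.

Fixpoint A (k n lo : nat) : nat :=
  match k with
  | 0 => (n == 0)
  | k'.+1 => \sum_(lo <= x < n.+1) A k' (n - x) x
  end.

Fixpoint Aq (k n lo : nat) : nat :=
  match k with
  | 0 => (n == 0)
  | k'.+1 => \sum_(lo.+1 <= x < n.+1) Aq k' (n - x) x
  end.

Lemma sum_narrow (F : nat -> nat) a b c :
  (forall x, b <= x -> x < c -> F x = 0) -> b <= c ->
  \sum_(a <= x < c) F x = \sum_(a <= x < b) F x.
Proof.
move=> H bc; case: (leqP a b) => ab.
  rewrite (big_cat_nat ab bc) /= [X in _ + X]big1_seq ?addn0 //.
  by move=> i /andP[_]; rewrite mem_index_iota => /andP[h1 h2]; apply: H.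
rewrite [RHS]big_geq ?(ltnW ab) //; apply: big1_seq => i /andP[_].
rewrite mem_index_iota => /andP[h1 h2]; apply: H => //; exact: leq_trans (ltnW ab) h1.
Qed.

Lemma A0 k n lo : 0 < k -> 0 < lo -> n < k -> A k n lo = 0.
Proof.
elim: k n lo => // k IH n lo _ lo0 nk /=.
apply: big1_seq => x /andP[_]; rewrite mem_index_iota => /andP[h1 h2].
case: k IH nk => [|k] IH nk.
  lia.
apply: IH => //; lia.
Qed.

Lemma Asplit k n lo : A k.+1 n lo = (if lo <= n then A k (n - lo) lo else 0) + A k.+1 n lo.+1.
Proof.
rewrite /=; case: ifP => h.
  by rewrite big_ltn.
by rewrite !big_geq //; lia.
Qed.

Lemma Ashift k n lo : 0 < lo -> A k n lo.+1 = A k (n - k) lo.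
Proof.
elim: k n lo => [|k IH] n lo lo0; first by rewrite subn0.
rewrite /=.
case: n => [|n].
  by rewrite !big_geq.
rewrite -(addn1 lo) big_addn.
rewrite (@eq_big_nat _ _ _ _ _ _ (fun i => A k (n.+1 - (i + 1) - k) i)); last first.
  by move=> i /andP[h1 h2]; rewrite [in X in A k _ X]addn1 IH //; apply: leq_trans lo0 h1.
rewrite (@sum_narrow _ _ (n.+1 - k.+1).+1); last by lia.
  by apply: eq_bigr => x _; congr A; lia.
move=> x h1 h2; case: k IH h1 => [|k] IH h1.
  lia.
apply: A0 => //; lia.
Qed.

Definition hh k m := A k (m + k) 1.

Lemma hh0 m : hh 0 m = (m == 0).
Proof. by rewrite /hh addn0. Qed.

Lemma hrec k m : hh k.+1 m = hh k m + (if k.+1 <= m then hh k.+1 (m - k.+1) else 0).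
Proof.
rewrite /hh Asplit ifT; last by lia.
have -> : m + k.+1 - 1 = m + k by lia.
rewrite [A k.+1 _ 2]Ashift // addnK.
case: ifP => h.
  by rewrite subnK.
by rewrite [A k.+1 m 1]A0 //; move/negbT: h; lia.
Qed.

Lemma A_hh k n : A k n 1 = if k <= n then hh k (n - k) else 0.
Proof.
case: ifP => h; first by rewrite /hh subnK.
case: k h => [|k] h; first by [].
by rewrite A0 //; move/negbT: h; lia.
Qed.

Lemma Aq_A k n lo : Aq k n lo = A k (n - 'C(k, 2)) lo.+1.
Proof.
elim: k n lo => [|k IH] n lo; first by rewrite bin0n subn0.
rewrite /= binS bin1.
rewrite (@eq_big_nat _ _ _ _ _ _ (fun x => A k (n - 'C(k.+1, 2) - x) x)); last first.
  move=> x /andP[h1 h2]; rewrite IH Ashift; last by lia.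
  by rewrite binS bin1; congr A; lia.
rewrite (@sum_narrow _ _ (n - ('C(k, 2) + k)).+1); last by lia.
  by rewrite binS bin1.
move=> x h1 h2; case: k IH h1 h2 => [|k] IH h1 h2.
  by rewrite bin0n /= in h1; lia.
rewrite binS bin1; apply: A0 => //; rewrite ?binS ?bin1 in h1 *; lia.
Qed.


Lemma card_sum (T : finType) (Q : pred T) : #|[set t | Q t]| = \sum_t (Q t : nat).
Proof.
rewrite -sum1_card big_mkcond /=; apply: eq_bigr => t _; rewrite inE; by case: (Q t).
Qed.

Lemma sum_tuple_cons n k (F : seq nat -> nat) :
  \sum_(t : k.+1.-tuple 'I_n.+1) F (map val t) =
  \sum_(x : 'I_n.+1) \sum_(t : k.-tuple 'I_n.+1) F (val x :: map val t).
Proof.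
rewrite pair_big /=.
rewrite (reindex (fun p : 'I_n.+1 * k.-tuple 'I_n.+1 => [tuple of p.1 :: p.2])) /=.
  by [].
apply: onW_bij; exists (fun t => (thead t, [tuple of behead t])).
  by case=> x t /=; congr pair; apply: val_inj.
by move=> t; rewrite [in RHS](tuple_eta t).
Qed.

Lemma sum_tuple0 n (F : seq nat -> nat) :
  \sum_(t : 0.-tuple 'I_n.+1) F (map val t) = F [::].
Proof.
by rewrite (big_pred1 [tuple]) // => t; apply/esym/eqP; apply: tuple0.
Qed.

Lemma sum_range (G : nat -> nat) lo n' n : n' <= n ->
  \sum_(x : 'I_n.+1) (if (lo <= x) && (x <= n') then G x else 0) =
  \sum_(lo <= x < n'.+1) G x.
Proof.
move=> h.
rewrite (@big_nat_widenl _ _ _ lo 0) // (@big_nat_widen _ _ _ 0 n'.+1 n.+1) //.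
rewrite big_mkcond /= big_mkord; apply: eq_bigr => x _.
by rewrite ltnS.
Qed.

Lemma G_A n k : forall n' lo, n' <= n ->
  \sum_(t : k.-tuple 'I_n.+1) (path leq lo (map val t) && (sumn (map val t) == n') : nat)
  = A k n' lo.
Proof.
elim: k => [|k IH] n' lo hn.
  by rewrite (sum_tuple0 _ (fun s : seq nat => nat_of_bool (path leq lo s && (sumn s == n')))) /= eq_sym.
rewrite (sum_tuple_cons _ _ (fun s : seq nat => nat_of_bool (path leq lo s && (sumn s == n')))) /=.
rewrite -(sum_range _ _ hn); apply: eq_bigr => x _.
case: ifP => hx.
  rewrite -IH; last by lia.
  apply: eq_bigr => t _.
  have -> : (x + sumn (map val t) == n') = (sumn (map val t) == n' - x).
    by apply/eqP/eqP; lia.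
  by case/andP: hx => -> _.
apply: big1 => t _.
case: (boolP (lo <= x)) hx => h1 /= hx; last by [].
have -> : (x + sumn (map val t) == n') = false by apply/eqP; lia.
by rewrite andbF.
Qed.

Lemma Gq_Aq n k : forall n' lo, n' <= n ->
  \sum_(t : k.-tuple 'I_n.+1) (path ltn lo (map val t) && (sumn (map val t) == n') : nat)
  = Aq k n' lo.
Proof.
elim: k => [|k IH] n' lo hn.
  by rewrite (sum_tuple0 _ (fun s : seq nat => nat_of_bool (path ltn lo s && (sumn s == n')))) /= eq_sym.
rewrite (sum_tuple_cons _ _ (fun s : seq nat => nat_of_bool (path ltn lo s && (sumn s == n')))) /=.
rewrite -(sum_range _ _ hn); apply: eq_bigr => x _.
case: ifP => hx.
  rewrite -IH; last by lia.
  apply: eq_bigr => t _.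
  have -> : (x + sumn (map val t) == n') = (sumn (map val t) == n' - x).
    by apply/eqP/eqP; lia.
  by case/andP: hx => -> _.
apply: big1 => t _.
case: (boolP (lo < x)) hx => h1 /= hx; last by [].
have -> : (x + sumn (map val t) == n') = false by apply/eqP; lia.
by rewrite andbF.
Qed.


Lemma pos_sorted_leq (s : seq nat) : (all (fun x => 0 < x) s && sorted leq s) = path leq 1 s.
Proof.
case: s => [|a s] //=.
case: (posnP a) => [->|a0] //=.
case: (boolP (path leq a s)) => h; last by rewrite andbF.
rewrite andbT; have := order_path_min leq_trans h.
apply: sub_all => x; exact: leq_trans.
Qed.

Lemma pos_sorted_ltn (s : seq nat) : (all (fun x => 0 < x) s && sorted ltn s) = path ltn 0 s.
Proof.
case: s => [|a s] //=.
case: (posnP a) => [->|a0] //=.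
case: (boolP (path ltn a s)) => h; last by rewrite andbF.
rewrite andbT; have := order_path_min ltn_trans h.
apply: sub_all => x; exact: leq_ltn_trans.
Qed.

Lemma p_part_A n k : Defs.p_part n k = A k n 1.
Proof.
rewrite /Defs.p_part card_sum -(@G_A n k n 1 (leqnn n)); apply: eq_bigr => t _.
by rewrite /is_partition size_map size_tuple eqxx /= andbA pos_sorted_leq.
Qed.

Lemma q_part_Aq n k : Defs.q_part n k = Aq k n 0.
Proof.
rewrite /Defs.q_part card_sum -(@Gq_Aq n k n 0 (leqnn n)); apply: eq_bigr => t _.
by rewrite /is_distinct_partition size_map size_tuple eqxx /= andbA pos_sorted_ltn.
Qed.


Lemma hh1 m : hh 1 m = 1.
Proof.
elim: m => [|m IH]; first by rewrite hrec hh0.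
by rewrite hrec hh0 /= subn1 /= IH.
Qed.

Lemma hh_mono k m : 0 < k -> hh k m <= hh k m.+1.
Proof.
case: k => // k _; elim: k m => [|k IHk] m; first by rewrite !hh1.
elim: m {-2}m (leqnn m) => [|M IHM] m hm.
  have -> : m = 0 by lia.
  by rewrite hrec [hh k.+2 1]hrec leq_add // IHk.
rewrite hrec [hh k.+2 m.+1]hrec leq_add ?IHk //.
case: ifP => h1; case: ifP => h2 //; try lia.
have -> : m.+1 - k.+2 = (m - k.+2).+1 by lia.
apply: IHM; lia.
Qed.

Definition F k v m := \sum_(1 <= l < (m %/ v).+1) hh k (m - v * l).

Definition R k m := \sum_(1 <= v < k.+1) v * F k v m.

Lemma F_small k v m : m < v -> F k v m = 0.
Proof.
move=> h; rewrite /F big_geq //.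
by rewrite divn_small.
Qed.

Lemma F_step k v m : 0 < v -> v <= m -> F k v m = hh k (m - v) + F k v (m - v).
Proof.
move=> v0 vm; rewrite /F.
have -> : m %/ v = ((m - v) %/ v).+1.
  by rewrite -{1}(subnK vm) divnDr ?dvdnn // divnn v0 addn1.
rewrite big_nat_recl // muln1; congr addn.
by apply: eq_bigr => l _; congr hh; rewrite mulnS; lia.
Qed.

Lemma F_rec k v m : 0 < v ->
  F k.+1 v m = F k v m + (if k.+1 <= m then F k.+1 v (m - k.+1) else 0).
Proof.
move=> v0; rewrite /F.
rewrite (eq_bigr (fun l => hh k (m - v * l) +
   (if k.+1 <= m - v * l then hh k.+1 (m - k.+1 - v * l) else 0))); last first.
  by move=> l _; rewrite hrec; case: ifP => // _; do 2 f_equal; lia.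
rewrite big_split /=; congr addn.
case: ifP => h.
  rewrite (@sum_narrow _ _ ((m - k.+1) %/ v).+1); last first.
  - by rewrite ltnS leq_div2r // leq_subr.
  - move=> l h1 h2; case: ifP => // h3; exfalso.
    have : l <= (m - k.+1) %/ v by rewrite leq_divRL //; lia.
    lia.
  apply: eq_big_nat => l /andP[h1 h2]; rewrite ifT //.
  move: h2; rewrite ltnS leq_divRL // => h2; lia.
apply: big1 => l _; rewrite ifF //; move/negbT: h; lia.
Qed.

Lemma MI k m : m * hh k m = R k m.
Proof.
elim: k m => [|k IHk] m.
  by rewrite hh0 /R big_geq //; case: m => // m; rewrite muln0.
elim: m {-2}m (leqnn m) => [|M IHM] m hm.
  have -> : m = 0 by lia.
  rewrite mul0n /R big1_seq // => v /andP[_]; rewrite mem_index_iota => /andP[h1 h2].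
  by rewrite F_small ?muln0 //.
rewrite /R big_nat_recr //=.
rewrite (@eq_big_nat _ _ _ _ _ _ (fun v => v * F k v m +
   (if k.+1 <= m then v * F k.+1 v (m - k.+1) else 0))); last first.
  by move=> v /andP[h1 _]; rewrite F_rec //; case: ifP => _; rewrite ?mulnDr ?muln0 ?addn0.
rewrite big_split /= -/(R k m) -IHk hrec mulnDr.
case: ifP => h; last first.
  rewrite big1 ?addn0 ?F_small ?muln0 //; move/negbT: h; lia.
rewrite F_step // -addnA; congr addn.
have := IHM (m - k.+1) ltac:(lia); rewrite /R big_nat_recr //= => E.
rewrite -{1}(subnK h) mulnDl E mulnDr; lia.
Qed.


Lemma hh_le k i j : 0 < k -> i <= j -> hh k i <= hh k j.
Proof.
move=> k0 /subnK <-; elim: (j - i) => [|d IH] //.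
by rewrite addSn; apply: leq_trans IH (hh_mono _ k0).
Qed.

Lemma leq_sum_nat' a b (F G : nat -> nat) :
  (forall i, a <= i < b -> F i <= G i) ->
  \sum_(a <= i < b) F i <= \sum_(a <= i < b) G i.
Proof.
move=> H; rewrite big_nat_cond [X in _ <= X]big_nat_cond.
by apply: leq_sum => i /andP[h _]; apply: H.
Qed.

Definition S k N := \sum_(0 <= j < N) hh k j.

Lemma S_split k a N : a <= N -> S k N = S k a + \sum_(a <= j < N) hh k j.
Proof. by move=> h; rewrite /S (big_cat_nat (leq0n a) h). Qed.

Lemma U_bound k v N : 0 < k -> 0 < v -> v * F k v N <= S k N.
Proof.
move=> k0 v0; elim: N {-2}N (leqnn N) => [|M IH] N hN.
  by rewrite F_small ?muln0 //; lia.
case: (ltnP N v) => h; first by rewrite F_small ?muln0.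
rewrite F_step // mulnDr (S_split k (leq_subr v N)) addnC leq_add //.
  apply: IH; lia.
apply: leq_trans (_ : \sum_(N - v <= j < N) hh k (N - v) <= _).
  by rewrite sum_nat_const_nat; have -> : N - (N - v) = v by lia.
by apply: leq_sum_nat' => i /andP[h1 h2]; apply: hh_le.
Qed.

Lemma L_bound k v N : 0 < k -> 0 < v -> S k N <= v * F k v N + (v - 1) * hh k N.
Proof.
move=> k0 v0; elim: N {-2}N (leqnn N) => [|M IH] N hN.
  have -> : N = 0 by lia. rewrite /S big_geq //.
case: (ltnP N v) => h.
  rewrite F_small // muln0 add0n.
  apply: leq_trans (_ : \sum_(0 <= j < N) hh k N <= _).
    by apply: leq_sum_nat' => i /andP[h1 h2]; apply: hh_le; lia.
  by rewrite sum_nat_const_nat leq_mul2r; apply/orP; right; lia.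
rewrite F_step // (S_split k (leq_subr v N)).
have h1 := IH (N - v) ltac:(lia).
have h2 : \sum_(N - v <= j < N) hh k j <= hh k (N - v) + (v - 1) * hh k N.
  rewrite big_ltn; last by lia.
  rewrite leq_add2l.
  apply: leq_trans (_ : \sum_((N - v).+1 <= j < N) hh k N <= _).
    by apply: leq_sum_nat' => i /andP[h3 h4]; apply: hh_le; lia.
  by rewrite sum_nat_const_nat leq_mul2r; apply/orP; right; lia.
have h3 : (v - 1) * hh k (N - v) + hh k (N - v) = v * hh k (N - v).
  by rewrite -mulSnr; congr muln; lia.
rewrite mulnDr; lia.
Qed.

Lemma sum_vm1 k : \sum_(1 <= v < k.+1) (v - 1) = 'C(k, 2).
Proof.
elim: k => [|k IH]; first by rewrite big_geq.
by rewrite big_nat_recr //= IH binS bin1 subn1.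
Qed.

Lemma E_upper k N : 0 < k -> N * hh k N <= k * S k N.
Proof.
move=> k0; rewrite MI /R.
apply: leq_trans (_ : \sum_(1 <= v < k.+1) S k N <= _).
  by apply: leq_sum_nat' => v /andP[h1 h2]; apply: U_bound.
by rewrite sum_nat_const_nat subn1.
Qed.

Lemma E_lower k N : 0 < k -> k * S k N <= (N + 'C(k, 2)) * hh k N.
Proof.
move=> k0; rewrite mulnDl MI /R -sum_vm1 big_distrl /= -big_split /=.
have -> : k * S k N = \sum_(1 <= v < k.+1) S k N by rewrite sum_nat_const_nat subn1.
by apply: leq_sum_nat' => v /andP[h1 h2]; apply: L_bound.
Qed.


Lemma hh_at0 k : hh k 0 = 1.
Proof. by elim: k => [|k IH]; rewrite ?hh0 // hrec IH. Qed.

Lemma hh_pos k m : 0 < k -> 0 < hh k m.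
Proof. by move=> k0; rewrite -(hh_at0 k); apply: hh_le. Qed.

Lemma bin2_double k : 'C(k, 2) * 2 = k * k.-1.
Proof.
elim: k => [|k IH] //; rewrite binS bin1 mulnDl IH; case: k {IH} => //= k; lia.
Qed.

Lemma p_hh n k : k <= n -> Defs.p_part n k = hh k (n - k).
Proof. by move=> h; rewrite p_part_A A_hh h. Qed.

Lemma q_hh n k : Defs.q_part n k = if k <= n - 'C(k, 2) then hh k (n - 'C(k, 2) - k) else 0.
Proof. by rewrite q_part_Aq Aq_A A_hh. Qed.

Lemma S_le k i j : i <= j -> S k i <= S k j.
Proof. by move=> h; rewrite (S_split k h) leq_addr. Qed.

Lemma bound2 n k : 2 <= k -> k <= n ->
  k ^ 3 * Defs.q_part n k <= 4 * (n + k ^ 2) * Defs.p_part n k.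
Proof.
move=> k2 kn; rewrite q_hh p_hh //.
case: ifP => h; last by rewrite muln0.
set C := 'C(k, 2); set N := n - k.
have hC : C * 2 = k * k.-1 by apply: bin2_double.
have ha : n - C - k = N - C by rewrite /N; lia.
rewrite ha.
have e1 : C * hh k (N - C) <= S k N.
  rewrite (S_split k (leq_subr C N)).
  apply: leq_trans (leq_addl _ _).
  apply: leq_trans (_ : \sum_(N - C <= j < N) hh k (N - C) <= _).
    by rewrite sum_nat_const_nat; have -> : N - (N - C) = C by lia.
  by apply: leq_sum_nat' => i /andP[h1 h2]; apply: hh_le => //; lia.
have e2 := E_lower N (ltnW k2).
rewrite -/C in e2.
have e3 : k * (C * hh k (N - C)) <= (N + C) * hh k N.
  by apply: leq_trans e2; rewrite leq_mul2l e1 orbT.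
have e4 : k ^ 3 <= 4 * (k * C) by nia.
have e5 : N + C <= n + k ^ 2 by nia.
apply: leq_trans (_ : 4 * (k * C) * hh k (N - C) <= _).
  by rewrite leq_mul2r e4 orbT.
rewrite -!mulnA leq_mul2l /=.
apply: leq_trans e3 _.
by rewrite leq_mul2r e5 orbT.
Qed.

Lemma bound1 n k : 2 <= k -> k ^ 3 < n ->
  Defs.q_part n k <= Defs.p_part n k /\
  (n - k ^ 3) * Defs.p_part n k <= (n - k ^ 3) * Defs.q_part n k + k ^ 3 * Defs.p_part n k.
Proof.
move=> k2 kn.
set C := 'C(k, 2).
have hC : C * 2 = k * k.-1 by apply: bin2_double.
have kC : k + C < n by nia.
rewrite q_hh p_hh; last by lia.
rewrite ifT; last by lia.
set N := n - k.
have ha : n - C - k = N - C by rewrite /N; lia.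
rewrite ha; set a := N - C.
have aN : a <= N by lia.
have a1 : 0 < a by lia.
have N1 : 0 < N by lia.
have k0 : 0 < k by lia.
set p := hh k N; set q := hh k a.
have qp : q <= p by apply: hh_le.
split => //.
set X := k * S k N.
have hi : N * p <= X by apply: E_upper.
have hii : k * S k a <= N * q.
  have := E_lower a k0; rewrite -/C (_ : a + C = N) //; lia.
set T := \sum_(a <= j < N) hh k j.
have hs : S k N = S k a + T by apply: S_split.
have hiii : a * T <= C * X.
  rewrite /T big_distrr /=.
  apply: leq_trans (_ : \sum_(a <= j < N) X <= _); last first.
    by rewrite sum_nat_const_nat; have -> : N - a = C by rewrite /a; lia.
  apply: leq_sum_nat' => j /andP[h1 h2].
  apply: leq_trans (_ : j * hh k j <= _); first by rewrite leq_mul2r h1 orbT.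
  apply: leq_trans (E_upper j k0) _.
  by rewrite leq_mul2l S_le ?orbT // ltnW.
have main : a * p <= a * q + (k * C) * p.
  case: (leqP a (k * C)) => hak.
    apply: leq_trans (leq_addl _ _); by rewrite leq_mul2r hak orbT.
  set d := a - k * C.
  have hd : a = d + k * C by rewrite /d; lia.
  have m1 : a * (k * S k a) + k * (a * T) = a * X.
    by rewrite /X hs mulnDr mulnDr; congr addn; exact: mulnCA.
  have m2 : d * (N * p) <= d * X by rewrite leq_mul2l hi orbT.
  have m3 : a * (k * S k a) <= a * (N * q) by rewrite leq_mul2l hii orbT.
  have m4 : k * (a * T) <= k * (C * X) by rewrite leq_mul2l hiii orbT.
  have m5 : N * (d * p) <= N * (a * q).
    have m0 : a * X = d * X + k * (C * X) by rewrite {1}hd mulnDl mulnA.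
    rewrite mulnCA [N * (a * q)]mulnCA.
    lia.
  have m6 : d * p <= a * q by rewrite leq_pmul2l // in m5.
  rewrite hd mulnDl; lia.
have c0 : k * k.-1 <= k * k by rewrite leq_mul2l leq_pred orbT.
have c3 : k ^ 3 = k * k * k by rewrite !expnS expn0 muln1 mulnA.
have c4 : k * k * 2 <= k * k * k by rewrite leq_mul2l k2 orbT.
have c5 : k <= k * k by rewrite leq_pmull // ltnW.
have hb : n - k ^ 3 <= a by rewrite /a /N; lia.
set b := n - k ^ 3.
have m7 : (a - b) * q <= (a - b) * p by rewrite leq_mul2l qp orbT.
have c6 : C <= k * k by lia.
have m8 : k * C <= k ^ 3 by rewrite c3 -mulnA leq_mul2l c6 orbT.
have m9 : k * C * p <= k ^ 3 * p by rewrite leq_mul2r m8 orbT.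
have e1 : a * q = b * q + (a - b) * q by rewrite -mulnDl subnKC.
have e2 : a * p = b * p + (a - b) * p by rewrite -mulnDl subnKC.
lia.
Qed.

Local Open Scope R_scope.

Lemma B2R n k : (2 <= k)%coq_nat -> (k <= n)%coq_nat ->
  INR k ^ 3 * INR (Defs.q_part n k) <= 4 * (INR n + INR k ^ 2) * INR (Defs.p_part n k) /\
  0 < INR (Defs.p_part n k).
Proof.
move=> /leP k2 /leP kn.
have H := bound2 k2 kn.
have e3 : (k ^ 3 = k * (k * k))%N by rewrite !expnS expn0 muln1.
have e2 : (k ^ 2 = k * k)%N by rewrite !expnS expn0 muln1.
rewrite e3 e2 in H.
have := le_INR _ _ (leP H).
rewrite -!multE -!plusE !mult_INR !plus_INR !mult_INR => H'.
split.
  have E4 : INR 4 = 4 by simpl; lra.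
  rewrite E4 in H'; simpl; lra.
apply: lt_0_INR; apply/ltP; rewrite p_hh //; apply: hh_pos; lia.
Qed.

Lemma B1R n k : (2 <= k)%coq_nat -> INR k ^ 3 < INR n ->
  INR (Defs.q_part n k) <= INR (Defs.p_part n k) /\
  (INR n - INR k ^ 3) * INR (Defs.p_part n k) <=
    (INR n - INR k ^ 3) * INR (Defs.q_part n k) + INR k ^ 3 * INR (Defs.p_part n k).
Proof.
move=> /leP k2 hn.
have e3 : (k ^ 3 = k * (k * k))%N by rewrite !expnS expn0 muln1.
have k3 : (k * (k * k) < n)%N.
  apply/ltP; apply: INR_lt; rewrite -!multE !mult_INR; simpl in hn; lra.
have [H1 H2] := bound1 k2 (ltac:(by rewrite e3) : (k ^ 3 < n)%N).
rewrite e3 in H2.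
split; first exact: (le_INR _ _ (leP H1)).
have := le_INR _ _ (leP H2).
have kle : (k * (k * k) <= n)%coq_nat by apply/leP; apply: ltnW.
rewrite -!multE -!plusE -!minusE !plus_INR !mult_INR minus_INR // !mult_INR.
simpl; lra.
Qed.
End NatPart.

Open Scope R_scope.

Theorem mainTheorem4 (n k : nat -> nat)
  (hk : forall m, (2 <= k m)%nat) (hn : forall m, (k m <= n m)%nat) :
  (cv_infty (fun m => INR (n m) / INR (k m) ^ 3) ->
     Un_cv (fun m => INR (q_part (n m) (k m)) / INR (p_part (n m) (k m))) 1)
  /\
  (Un_cv (fun m => INR (n m) / INR (k m) ^ 3) 0 ->
     Un_cv (fun m => INR (q_part (n m) (k m)) / INR (p_part (n m) (k m))) 0).
Proof.
split.
- intros Hinf eps Heps.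
  destruct (Hinf (2 + 1 / eps)) as [N HN].
  exists N. intros m Hm.
  specialize (HN m Hm).
  destruct (@NatPart.B2R (n m) (k m) (hk m) (hn m)) as [_ HP].
  set (K := INR (k m)) in *. set (Nn := INR (n m)) in *.
  set (P := INR (p_part (n m) (k m))) in *.
  set (Q := INR (q_part (n m) (k m))) in *.
  assert (HK : 2 <= K) by (unfold K; replace 2 with (INR 2) by (simpl; lra); apply le_INR; apply hk).
  assert (HK3 : 0 < K ^ 3) by (apply pow_lt; lra).
  assert (HN' : (2 + 1 / eps) * K ^ 3 < Nn).
  { unfold Rdiv in HN. apply (Rmult_lt_compat_r (K ^ 3)) in HN; [|lra].
    rewrite Rmult_assoc, Rinv_l in HN; lra. }
  assert (Hpos : 0 < 1 / eps) by (apply Rdiv_lt_0_compat; lra).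
  assert (Hlt : K ^ 3 < Nn) by nra.
  destruct (@NatPart.B1R (n m) (k m) (hk m) Hlt) as [HQP HB].
  fold P Q K Nn in HQP, HB.
  set (u := K ^ 3 / eps).
  assert (Hu : u * eps = K ^ 3) by (unfold u; field; lra).
  assert (Hu0 : 0 < u) by (unfold u; apply Rdiv_lt_0_compat; lra).
  assert (HuD : u < Nn - K ^ 3).
  { unfold u. unfold Rdiv. replace (1 / eps) with (/ eps) in HN' by (field; lra). nra. }
  assert (Hmain : P - Q < eps * P).
  { destruct (Rle_lt_dec (P - Q) 0) as [Hle|Hgt]; [assert (0 < eps * P) by (apply Rmult_lt_0_compat; lra); lra|].
    assert (A1 : u * (P - Q) < (Nn - K ^ 3) * (P - Q)) by (apply Rmult_lt_compat_r; lra).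
    assert (A2 : (Nn - K ^ 3) * (P - Q) = (Nn - K ^ 3) * P - (Nn - K ^ 3) * Q) by ring.
    assert (A3 : u * (eps * P) = K ^ 3 * P) by (rewrite <- Hu; ring).
    assert (u * (P - Q) < u * (eps * P)) by lra.
    apply (Rmult_lt_reg_l u); lra. }
  unfold R_dist, Rdist.
  rewrite Rabs_left1.
  + apply (Rmult_lt_reg_r P); [lra|].
    replace (- (Q / P - 1) * P) with (P - Q) by (field; lra). lra.
  + apply (Rmult_le_reg_r P); [lra|].
    replace ((Q / P - 1) * P) with (Q - P) by (field; lra). lra.
- intros H0 eps Heps.
  set (d := Rmin (eps / 8) ((eps / 8) ^ 2)).
  assert (Hd : 0 < d) by (unfold d; apply Rmin_pos; [lra| apply pow_lt; lra]).
  destruct (H0 d Hd) as [N HN].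
  exists N. intros m Hm.
  specialize (HN m Hm).
  destruct (@NatPart.B2R (n m) (k m) (hk m) (hn m)) as [HB HP].
  set (K := INR (k m)) in *. set (Nn := INR (n m)) in *.
  set (P := INR (p_part (n m) (k m))) in *.
  set (Q := INR (q_part (n m) (k m))) in *.
  assert (HK : 2 <= K) by (unfold K; replace 2 with (INR 2) by (simpl; lra); apply le_INR; apply hk).
  assert (HKN : K <= Nn) by (unfold K, Nn; apply le_INR; apply hn).
  assert (HK3 : 0 < K ^ 3) by (apply pow_lt; lra).
  assert (HQ : 0 <= Q) by apply pos_INR.
  unfold R_dist, Rdist in HN. rewrite Rminus_0_r in HN.
  assert (Hx : Nn / K ^ 3 < d) by (eapply Rle_lt_trans; [apply Rle_abs|exact HN]).
  assert (Hx' : Nn < d * K ^ 3).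
  { apply (Rmult_lt_compat_r (K ^ 3)) in Hx; [|lra].
    unfold Rdiv in Hx. rewrite Rmult_assoc, Rinv_l in Hx; lra. }
  assert (Hd1 : d <= eps / 8) by apply Rmin_l.
  assert (Hd2 : d <= (eps / 8) ^ 2) by apply Rmin_r.
  assert (H1 : Nn < eps / 8 * K ^ 3) by nra.
  assert (H2 : K < (eps / 8) ^ 2 * K ^ 3) by nra.
  set (t := eps * K / 8).
  assert (Ht2 : 1 < t * t).
  { unfold t. simpl in H2. 
    assert (K * 1 < K * ((eps / 8) * (eps / 8) * K * K)) by (simpl in H2; nra).
    apply Rmult_lt_reg_l in H; [|lra]. nra. }
  assert (Ht : 1 < t).
  { unfold t. assert (0 < eps * K / 8) by (apply Rdiv_lt_0_compat; nra). fold t in H. nra. }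
  assert (H3 : 4 * (Nn + K ^ 2) < eps * K ^ 3).
  { unfold t in Ht. simpl in *. nra. }
  assert (HQP : Q < eps * P).
  { assert (K ^ 3 * Q < K ^ 3 * (eps * P)) by nra.
    apply (Rmult_lt_reg_l (K ^ 3)); lra. }
  unfold R_dist, Rdist. rewrite Rminus_0_r, Rabs_pos_eq.
  + apply (Rmult_lt_reg_r P); [lra|].
    replace (Q / P * P) with Q by (field; lra). lra.
  + unfold Rdiv; apply Rmult_le_pos; [lra| left; apply Rinv_0_lt_compat; lra].
Qed.
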